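(* Let $\Pi=\{R_1,\dots,R_n\}$ be a logic program and let $\mathbb{P}_\Pi$ be the $\mathrm{LP}^{\mathrm{MLN}}$ program $\{\alpha:R_1,\dots,\alpha:R_n\}$. The (deterministic) stable models of $\Pi$ are exactly the (probabilistic) stable models $I$ of $\mathbb{P}_\Pi$ with $W_{\mathbb{P}_\Pi}(I)=e^{k\alpha}$, where $k$ is the number of all ground rules of $\Pi$. Moreover, if $\Pi$ has at least one stable model, then all (probabilistic) stable models of $\mathbb{P}_\Pi$ have the same probability, and are thus the stable models of $\Pi$ as well.
   Context: Fix a first-order signature $\sigma$ with no function constants of positive arity; Herbrand interpretations are identified with sets of ground atoms. A formula is negative if every occurrence of every atom is in the scope of negation. A rule has the form $A\leftarrow B\wedge N$ ($A$ a possibly empty disjunction of atoms, $B$ a conjunction of atoms, $N$ a negative formula), identified with $B\wedge N\rightarrow A$; a logic program is a finite set of rules, identified with its ground instance. For a ground program $\Pi$, the reduct $\Pi^I$ consists of $A\leftarrow B$ for all rules $A\leftarrow B\wedge N$ in $\Pi$ with $I\models N$; $I$ is a (deterministic) stable model of $\Pi$ if $I$ is a minimal Herbrand model of $\Pi^I$. An $\mathrm{LP}^{\mathrm{MLN}}$ program $\Pi$ is a finite set of weighted rules $w:R$, $w$ a real number or the symbol $\alpha$ (''infinite weight''), identified with its ground instance (weights inherited). $\overline{\Pi}=\{R\mid w:R\in\Pi\}$; $\Pi_I=\{w:R\in\Pi\mid I\models R\}$; $\mathrm{SM}[\Pi]=\{I\mid I\text{ is a stable model of }\overline{\Pi_I}\}$.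 With $\alpha$ treated as a real parameter, the weight is $W_\Pi(I)=\exp(\sum_{w:R\in\Pi_I}w)$ if $I\in\mathrm{SM}[\Pi]$ and $0$ otherwise; the probability is $P_\Pi(I)=\lim_{\alpha\to\infty}W_\Pi(I)/\sum_{J\in\mathrm{SM}[\Pi]}W_\Pi(J)$. $I$ is a (probabilistic) stable model of $\Pi$ if $P_\Pi(I)\neq 0$. *)

(* Defs.v *)
From Stdlib Require Import Reals.
From Coquelicot Require Import Coquelicot.
From mathcomp Require Import all_boot.

Set Implicit Arguments.
Unset Strict Implicit.
Unset Printing Implicit Defensive.

Section LP.
Variable A : finType.  (* ground atoms (the Herbrand base) *)

Inductive formula : Type :=
| FAtom of A
| FBot
| FTop
| FNot of formula
| FAnd of formula & formula
| FOr of formula & formula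
| FImp of formula & formula.

Fixpoint fsat (I : {set A}) (F : formula) : bool :=
  match F with
  | FAtom a => a \in I
  | FBot => false
  | FTop => true
  | FNot G => ~~ fsat I G
  | FAnd G H => fsat I G && fsat I H
  | FOr G H => fsat I G || fsat I H
  | FImp G H => fsat I G ==> fsat I H
  end.

Fixpoint negative (F : formula) : bool :=
  match F with
  | FAtom _ => false
  | FBot | FTop => true
  | FNot _ => true
  | FAnd G H | FOr G H | FImp G H => negative G && negative H
  end.

(* Ground rule  A <- B /\ N : head is a (possibly empty) disjunction of
   atoms, pos_body a conjunction of atoms, neg_body a (negative) formula. *)
Record rule : Type := Rule {
  head : seq A;
  pos_body : seq A;
  neg_body : formula
}.

Definition rsat (I : {set A}) (r : rule) : bool :=
  (all (fun a => a \in I) (pos_body r) && fsat I (neg_body r)) ==>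
  has (fun a => a \in I) (head r).

(* Ground logic program (the ground instance of a program). *)
Definition program := seq rule.

(* Positive rules A <- B of the reduct, as (head, body) pairs. *)
Definition reduct (P : program) (I : {set A}) : seq (seq A * seq A) :=
  [seq (head r, pos_body r) | r <- P & fsat I (neg_body r)].

Definition pmodel (P : seq (seq A * seq A)) (J : {set A}) : bool :=
  all (fun c => all (fun a => a \in J) c.2 ==> has (fun a => a \in J) c.1) P.

Definition minimal_model (P : seq (seq A * seq A)) (I : {set A}) : bool :=
  pmodel P I && [forall J : {set A}, (J \proper I) ==> ~~ pmodel P J].

Definition stable_model (P : program) (I : {set A}) : bool :=
  minimal_model (reduct P I) I.

Local Open Scope R_scope.
Inductive weight : Type := WReal of R | WAlpha.

Definition wval (alpha : R) (w : weight) : R :=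
  match w with WReal x => x | WAlpha => alpha end.

Definition mln_program := seq (weight * rule).

Definition mln_sat (P : mln_program) (I : {set A}) : mln_program :=
  [seq wr <- P | rsat I wr.2].

Definition mln_rules (P : mln_program) : program := [seq wr.2 | wr <- P].

Definition in_SM (P : mln_program) (I : {set A}) : bool :=
  stable_model (mln_rules (mln_sat P I)) I.

(* W_Pi(I), as a function of the real parameter alpha. *)
Definition mln_weight (P : mln_program) (I : {set A}) (alpha : R) : R :=
  if in_SM P I
  then exp (foldr Rplus R0 [seq wval alpha wr.1 | wr <- mln_sat P I])
  else 0.

(* P_Pi(I) = lim_{alpha -> oo} W(I) / sum_{J in SM} W(J)
   (W(J) = 0 for J not in SM, so the sum may range over all J). *)
Definition mln_prob (P : mln_program) (I : {set A}) : R :=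
  real (Lim (fun alpha => mln_weight P I alpha /
     foldr Rplus R0 [seq mln_weight P J alpha | J <- enum [set: {set A}]])
     p_infty).

Definition prob_stable_model (P : mln_program) (I : {set A}) : Prop :=
  mln_prob P I <> 0.

Definition hard_program (P : program) : mln_program :=
  [seq (WAlpha, r) | r <- P].
End LP.

(* Main.v *)
Require Import Defs.
From Stdlib Require Import Reals Lra.
From Coquelicot Require Import Coquelicot.
From mathcomp Require Import all_boot.

Lemma sat_hard (A : finType) (Pi : program A) J :
  mln_sat (hard_program Pi) J = hard_program [seq r <- Pi | rsat J r].
Proof. elim: Pi => [|r l IH] //=; rewrite /mln_sat /= in IH *; case: (rsat J r) => //=; by rewrite IH. Qed.

Lemma sum_hard (A : finType) (l : program A) al :
  foldr Rplus R0 [seq wval al wr.1 | wr <- hard_program l] = (INR (size l) * al)%R.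
Proof.
elim: l => [|r l IH]; first (simpl; ring).
rewrite [size _]/= S_INR /= IH; ring.
Qed.

Lemma rules_hard (A : finType) (l : program A) : mln_rules (hard_program l) = l.
Proof. elim: l => [|r l IH] //=; by rewrite IH. Qed.

Lemma weight_eq (A : finType) (Pi : program A) J al :
  mln_weight (hard_program Pi) J al =
  if stable_model [seq r <- Pi | rsat J r] J then exp (INR (count (rsat J) Pi) * al) else R0.
Proof.
rewrite /mln_weight /in_SM sat_hard rules_hard sum_hard size_filter //.
Qed.

Lemma pmodel_all (A : finType) (Pi : program A) J :
  pmodel (reduct Pi J) J -> all (rsat J) Pi.
Proof.
elim: Pi => [|r l IH] //=.
rewrite /reduct /= /rsat.
case E: (fsat J (neg_body r)) => /=; last by rewrite andbF /=; exact: IH.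
by rewrite andbT => /andP [-> H]; exact: IH.
Qed.

Lemma stable_all (A : finType) (Pi : program A) J :
  stable_model Pi J -> all (rsat J) Pi.
Proof. by rewrite /stable_model /minimal_model => /andP [H _]; exact: pmodel_all. Qed.

Lemma stable_iff (A : finType) (Pi : program A) J :
  stable_model Pi J = (count (rsat J) Pi == size Pi) && stable_model [seq r <- Pi | rsat J r] J.
Proof.
case HS: (stable_model Pi J).
  by have H := @stable_all _ _ _ HS; rewrite -all_count H (all_filterP H) HS.
case E: (count (rsat J) Pi == size Pi) => //=.
by rewrite -all_count in E; rewrite (all_filterP E) HS.
Qed.
Lemma exp_neg_lim (c : R) : (c < 0)%R -> is_lim (fun al => exp (c * al)) p_infty 0.
Proof.
move=> Hc.
apply: (is_lim_comp exp (fun al => c * al)%R p_infty 0 m_infty).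
- exact: is_lim_exp_m.
- have H := is_lim_scal_l (fun y => y) c p_infty p_infty (is_lim_id p_infty).
  have E : Rbar_mult c p_infty = m_infty.
    simpl. destruct (Rle_dec 0 c) as [h|h]; [exfalso; exact: (Rlt_not_le _ _ Hc h) | reflexivity].
  by rewrite E in H.
- exists R0 => y _. discriminate.
Qed.

Lemma term_lim (A : finType) (Pi : program A) J :
  is_lim (fun al => mln_weight (hard_program Pi) J al * exp (- (INR (size Pi) * al)))%R
    p_infty (if stable_model Pi J then R1 else R0).
Proof.
rewrite stable_iff.
case E2: (stable_model [seq r <- Pi | rsat J r] J); last first.
  rewrite andbF.
  apply: (is_lim_ext (fun _ => R0)); last exact: is_lim_const.
  by move=> y; rewrite weight_eq E2 Rmult_0_l.
rewrite andbT.
have kn : (count (rsat J) Pi <= size Pi)%N by exact: count_size.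
case E: (count (rsat J) Pi == size Pi).
  apply: (is_lim_ext (fun _ => R1)); last exact: is_lim_const.
  move=> y; rewrite weight_eq E2 (eqP E) -exp_plus Rplus_opp_r exp_0 //.
apply: (is_lim_ext (fun al => exp ((INR (count (rsat J) Pi) - INR (size Pi)) * al))).
  move=> y; rewrite weight_eq E2 -exp_plus; f_equal; ring.
apply: exp_neg_lim.
have lt : (count (rsat J) Pi < size Pi)%N by rewrite ltn_neqAle E kn.
apply: Rlt_minus; apply: lt_INR; apply/ltP; exact: lt.
Qed.

Lemma sum_lim (T : Type) (L : seq T) (f : T -> R -> R) (l : T -> R) :
  (forall x, is_lim (f x) p_infty (l x)) ->
  is_lim (fun al => foldr Rplus R0 (map (fun x => f x al) L)) p_infty (foldr Rplus R0 (map l L)).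
Proof.
move=> H; elim: L => [|x L IH] /=; first exact: is_lim_const.
exact: is_lim_plus'.
Qed.

Lemma sum_scale (T : Type) (L : seq T) (g : T -> R) c :
  (foldr Rplus R0 (map g L) * c = foldr Rplus R0 (map (fun x => g x * c) L))%R.
Proof. elim: L => [|x L IH] /=; first ring. rewrite -IH; ring. Qed.

Lemma sum_ge (T : eqType) (L : seq T) (g : T -> R) x :
  (forall y, R0 <= g y)%R -> x \in L -> (g x <= foldr Rplus R0 (map g L))%R.
Proof.
move=> Hg; elim: L => [|y L IH] //=.
rewrite in_cons; case/orP => [/eqP ->|Hx].
  have : (R0 <= foldr Rplus R0 (map g L))%R.
    elim: L {IH} => [|z L IH'] /=; first exact: Rle_refl.
    have := Hg z; lra.
  lra.
have := IH Hx; have := Hg y; lra.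
Qed.

Lemma weight_ge (A : finType) (P : mln_program A) J al : (R0 <= mln_weight P J al)%R.
Proof. rewrite /mln_weight; case: in_SM; [exact: Rlt_le (exp_pos _) | exact: Rle_refl]. Qed.

Lemma prob_eq (A : finType) (Pi : program A) I0 :
  stable_model Pi I0 -> forall J,
  mln_prob (hard_program Pi) J =
  ((if stable_model Pi J then R1 else R0) /
    foldr Rplus R0 (map (fun K => if stable_model Pi K then R1 else R0) (enum [set: {set A}])))%R.
Proof.
move=> H0 J.
set a := fun K => if stable_model Pi K then R1 else R0.
set M := foldr Rplus R0 _.
have I0L : I0 \in enum [set: {set A}] by rewrite mem_enum in_setT.
have Mpos : (R0 < M)%R.
  have := @sum_ge _ (enum [set: {set A}]) a I0.
  rewrite /a H0 => h; apply: (Rlt_le_trans _ R1); first exact: Rlt_0_1.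
  apply: h => //; move=> y; case: (stable_model Pi y); [exact: Rle_0_1 | exact: Rle_refl].
set W := mln_weight (hard_program Pi).
have Spos : forall al, (R0 < foldr Rplus R0 [seq W K al | K <- enum [set: {set A}]])%R.
  move=> al; apply: (Rlt_le_trans _ (W I0 al)).
    rewrite /W weight_eq.
    have := @stable_all _ _ _ H0; rewrite all_count => /eqP Hc.
    have := H0; rewrite stable_iff => /andP [_ ->]; exact: exp_pos.
  apply: (@sum_ge _ _ (fun K => W K al)) => // y; exact: weight_ge.
rewrite /mln_prob -/W.
rewrite (is_lim_unique _ _ (Rbar.Finite (Rdiv (a J) M))) //.
apply: (is_lim_ext (fun al => (W J al * exp (- (INR (size Pi) * al))) /
   foldr Rplus R0 (map (fun K => W K al * exp (- (INR (size Pi) * al))) (enum [set: {set A}])))%R).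
  move=> y; rewrite -(sum_scale _ _ (fun K => W K y)).
  field; split; apply: Rgt_not_eq; first [exact: exp_pos | exact: Spos].
have HM : Rbar.Finite M <> Rbar.Finite R0 by move=> [] E; rewrite E in Mpos; exact: (Rlt_irrefl _ Mpos).
have := is_lim_div _ _ p_infty _ _ (@term_lim A Pi J)
   (sum_lim _ (enum [set: {set A}]) (fun K al => W K al * exp (- (INR (size Pi) * al)))%R a (fun K => @term_lim A Pi K)) HM I.
by [].
Qed.

Theorem theorem1 (A : finType) (Pi : program A) :
  (forall r, List.In r Pi -> negative (neg_body r)) ->
  (forall I : {set A},
     stable_model Pi I <->
     (prob_stable_model (hard_program Pi) I /\
      forall alpha : R,
        mln_weight (hard_program Pi) I alpha = exp (Rmult (INR (size Pi)) alpha))) /\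
  ((exists I : {set A}, stable_model Pi I) ->
     (forall I J : {set A},
        prob_stable_model (hard_program Pi) I ->
        prob_stable_model (hard_program Pi) J ->
        mln_prob (hard_program Pi) I = mln_prob (hard_program Pi) J) /\
     (forall I : {set A},
        prob_stable_model (hard_program Pi) I -> stable_model Pi I)).
Proof.
move=> _.
have Mpos : forall I0, stable_model Pi I0 ->
  foldr Rplus R0 (map (fun K => if stable_model Pi K then R1 else R0) (enum [set: {set A}])) <> R0.
  move=> I0 H0 E.
  have := @sum_ge _ (enum [set: {set A}]) (fun K => if stable_model Pi K then R1 else R0) I0.
  rewrite H0 E mem_enum in_setT => h.
  have h1 : (R1 <= R0)%R.
    apply: h => // y; case: (stable_model Pi y); [exact: Rle_0_1 | exact: Rle_refl].
  exact: (Rlt_not_le _ _ Rlt_0_1 h1).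
split.
  move=> I; split.
    move=> HI; split.
      rewrite /prob_stable_model (@prob_eq _ _ _ HI) HI.
      rewrite /Rdiv Rmult_1_l; apply: Rinv_neq_0_compat; exact: (Mpos _ HI).
    move=> al; rewrite weight_eq.
    have := @stable_all _ _ _ HI; rewrite all_count => /eqP ->.
    by have := HI; rewrite stable_iff => /andP [_ ->].
  move=> [_ HW]; have := HW R1; rewrite weight_eq.
  case E: (stable_model [seq r <- Pi | rsat I r] I); last first.
    move=> h; have := exp_pos (INR (size Pi) * R1); rewrite -h => /Rlt_irrefl [].
  move=> hh; move: (exp_inv _ _ hh); rewrite !Rmult_1_r => /INR_eq Hc.
  by rewrite stable_iff E Hc eqxx.
move=> [I0 H0]; split.
  move=> I J HI HJ.
  rewrite !(@prob_eq _ _ _ H0).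
  case EI: (stable_model Pi I); last by rewrite /prob_stable_model (@prob_eq _ _ _ H0) EI /Rdiv Rmult_0_l in HI.
  case EJ: (stable_model Pi J); last by rewrite /prob_stable_model (@prob_eq _ _ _ H0) EJ /Rdiv Rmult_0_l in HJ.
  by [].
move=> I HI.
case EI: (stable_model Pi I) => //.
by rewrite /prob_stable_model (@prob_eq _ _ _ H0) EI /Rdiv Rmult_0_l in HI.
Qed.
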